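(* Consider Setting A with all nodes running Algorithm 1, and suppose the graph sequence satisfies conditions (C1) and (C3). Then for every sub-state $j$, every $i\in\mathcal V$ and every $k\ge t_{N-1}$, $$\tau^{(j)}_i[k]\le 2(N-1)\,g(k),$$ where $g(k)=f(m(k))$ with $m(k)=\max\{t_q\in\mathbb I:t_q\le k\}$ and $f(t_q)=t_{q+1}-t_q$.
   Context: Setting A. Consider the discrete-time LTI system $x[k+1]=Ax[k]$, $k\in\mathbb N$, with $A\in\mathbb R^{n\times n}$, monitored by $N$ nodes $\mathcal V=\{1,\dots,N\}$; node $i$ measures $y_i[k]=C_ix[k]$ with $C_i\in\mathbb R^{r_i\times n}$. Let $C=[C_1^T\ \cdots\ C_N^T]^T$ and assume $(A,C)$ is observable. Fix an invertible $T$ such that $\bar A=T^{-1}AT$ is block lower-triangular with diagonal blocks $A_{11},\dots,A_{NN}$ and off-diagonal blocks $A_{jq}$ ($q<j$), zero blocks above the diagonal, and $C_iT=[C_{i1}\ \cdots\ C_{ii}\ 0\ \cdots\ 0]$ for each $i$, with $(A_{jj},C_{jj})$ observable for every $j$ (such $T$ exists). With $z[k]=T^{-1}x[k]$ partitioned compatibly into sub-states $z^{(1)}[k],\dots,z^{(N)}[k]$, one has $z^{(j)}[k+1]=A_{jj}z^{(j)}[k]+\sum_{q=1}^{j-1}A_{jq}z^{(q)}[k]$ and $y_j[k]=\sum_{q=1}^{j}C_{jq}z^{(q)}[k]$. Node $j$ is called the source node of sub-state $j$. Communication: at each time $k$ there is a directed graph $\mathcal G[k]=(\mathcal V,\mathcal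 E[k])$; $(l,i)\in\mathcal E[k]$ means $l$ can send to $i$ at time $k$; $\mathcal N_i[k]=\{l\neq i:(l,i)\in\mathcal E[k]\}$. The union graph over $[k_1,k_2]$ has vertex set $\mathcal V$ and edge set $\bigcup_{\tau=k_1}^{k_2}\mathcal E[\tau]$. Algorithm 1 (run for every sub-state $j$ simultaneously). Each node $i$ keeps an estimate $\hat z^{(j)}_i[k]$ (arbitrary initial value) and a freshness index $\tau^{(j)}_i[k]\in\mathbb N\cup\{\omega\}$, where $\omega$ is a special symbol; initially $\tau^{(j)}_j[0]=0$ and $\tau^{(j)}_i[0]=\omega$ for $i\ne j$. Source node $j$: $\tau^{(j)}_j[k]=0$ for all $k$, and $\hat z^{(j)}_j[k+1]=(A_{jj}-L_jC_{jj})\hat z^{(j)}_j[k]+\sum_{q=1}^{j-1}(A_{jq}-L_jC_{jq})\hat z^{(q)}_j[k]+L_jy_j[k]$, where $L_j$ is an observer gain. Non-source node $i\neq j$ at time $k$: let $\mathcal M^{(j)}_i[k]=\{l\in\mathcal N_i[k]:\tau^{(j)}_l[k]\neq\omega\}$; if $\tau^{(j)}_i[k]=\omega$ let $\mathcal F^{(j)}_i[k]=\mathcal M^{(j)}_i[k]$, otherwise $\mathcal F^{(j)}_i[k]=\{l\in\mathcal M^{(j)}_i[k]:\tau^{(j)}_l[k]<\tau^{(j)}_i[k]\}$. If $\mathcal F^{(j)}_i[k]\ne\emptyset$, pick $u\in\arg\min_{l\in\mathcal F^{(j)}_i[k]}\tau^{(j)}_l[k]$ and set $\tau^{(j)}_i[k+1]=\tau^{(j)}_u[k]+1$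 and $\hat z^{(j)}_i[k+1]=A_{jj}\hat z^{(j)}_u[k]+\sum_{q=1}^{j-1}A_{jq}\hat z^{(q)}_i[k]$ (''$i$ adopts the information of $u$ at time $k$''). If $\mathcal F^{(j)}_i[k]=\emptyset$, set $\tau^{(j)}_i[k+1]=\omega$ if $\tau^{(j)}_i[k]=\omega$ and $\tau^{(j)}_i[k+1]=\tau^{(j)}_i[k]+1$ otherwise, and $\hat z^{(j)}_i[k+1]=A_{jj}\hat z^{(j)}_i[k]+\sum_{q=1}^{j-1}A_{jq}\hat z^{(q)}_i[k]$ (''$i$ adopts its own information''). Conditions on the graph sequence: there is an increasing sequence $\mathbb I=\{t_0,t_1,\dots\}\subset\mathbb N$ with $t_0=0$ such that, with $f(t_q)=t_{q+1}-t_q$: (C1) $f(t_q)$ is non-decreasing in $q$; (C3) for each $q$, the union graph over $[t_q,t_{q+1}-1]$ is strongly connected. *)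

(* Defs.v *)
From mathcomp Require Import all_boot.
Set Implicit Arguments. Unset Strict Implicit. Unset Printing Implicit Defensive.

(* Freshness index: [None] encodes the special symbol omega, [Some n] encodes n. *)
Definition findex := option nat.

(* Communication graphs: [E k l i] means (l,i) is in E[k], i.e. l can send to i
   at time k. Nodes are 'I_N. *)
Definition graph_seq (N : nat) := nat -> rel 'I_N.

Definition union_rel (N : nat) (E : graph_seq N) (k1 k2 : nat) : rel 'I_N :=
  fun l i => has (fun s => E s l i) (index_iota k1 k2.+1).

Definition strongly_connected (N : nat) (r : rel 'I_N) : Prop :=
  forall u v : 'I_N, connect r u v.

Definition omin (a b : findex) : findex :=
  match a, b with
  | None, _ => b
  | _, None => a
  | Some x, Some y => Some (minn x y)
  end.

Definition fresher (a b : findex) : bool :=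
  match a, b with
  | Some _, None => true
  | Some x, Some y => x < y
  | None, _ => false
  end.

Definition Fset (N : nat) (E : graph_seq N) (k : nat) (tau : 'I_N -> findex)
  (i : 'I_N) : seq 'I_N :=
  [seq l <- enum 'I_N | [&& l != i, E k l i & fresher (tau l) (tau i)]].

(* If F is nonempty, i adopts the
   information of a minimiser u, so tau_i[k+1] = tau_u[k] + 1 (the minimal value);
   otherwise omega stays omega and a number is incremented. *)
Definition tau_next (N : nat) (E : graph_seq N) (k : nat) (tau : 'I_N -> findex)
  (i : 'I_N) : findex :=
  let F := Fset E k tau i in
  if F is _ :: _ then omap S (foldr omin None (map tau F))
  else omap S (tau i).

(* tau E j k i = tau_i^{(j)}[k] under Algorithm 1 (source node j). *)
Fixpoint tau (N : nat) (E : graph_seq N) (j : 'I_N) (k : nat) : 'I_N -> findex :=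
  match k with
  | 0 => fun i => if i == j then Some 0 else None
  | k'.+1 => let p := tau E j k' in
             fun i => if i == j then Some 0 else tau_next E k' p i
  end.

(* Main.v *)
Require Import Defs.
From mathcomp Require Import all_boot.
From mathcomp Require Import zify.
Set Implicit Arguments. Unset Strict Implicit. Unset Printing Implicit Defensive.

Lemma foldr_omin_le (s : seq (option nat)) v : Some v \in s ->
  exists y, foldr omin None s = Some y /\ y <= v.
Proof.
elim: s => [|a s IH] //=; rewrite in_cons => /orP [/eqP <-|/IH [y [-> hy]]].
  case: (foldr omin None s) => [y|] /=; [exists (minn v y); split => //; exact: geq_minl|by exists v].
case: a => [x|] /=; last by exists y.
exists (minn x y); split => //; apply: leq_trans hy; exact: geq_minr.
Qed.

Lemma memF N (E : graph_seq N) k p i l :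
  (l \in Fset E k p i) = [&& l != i, E k l i & fresher (p l) (p i)].
Proof. by rewrite /Fset mem_filter mem_enum andbT. Qed.

Lemma next_min N (E : graph_seq N) k p i l v (F0 : seq 'I_N) :
  Fset E k p i = F0 -> l \in F0 -> p l = Some v ->
  exists m, tau_next E k p i = Some m /\ m <= v.+1.
Proof.
move=> hF hl hv; rewrite /tau_next hF.
have: Some v \in map p F0 by apply/mapP; exists l.
move=> /foldr_omin_le [y [hy hyv]].
case: F0 hF hl hy => [|a F] // hF _ hy; rewrite hy /=; by exists y.+1.
Qed.

Lemma next_self N (E : graph_seq N) k p i n : p i = Some n ->
  exists m, tau_next E k p i = Some m /\ m <= n.+1.
Proof.
move=> hi; case hF: (Fset E k p i) => [|a F].
  by rewrite /tau_next hF hi /=; exists n.+1.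
have ha : a \in Fset E k p i by rewrite hF mem_head.
move: (ha); rewrite memF => /and3P [_ _ hfr].
move: hfr; rewrite hi; case hpa: (p a) => [x|] //= hx.
have [m [hm hmx]] := next_min hF (mem_head a F) hpa.
exists m; split => //; apply: leq_trans hmx _; exact: ltnW.
Qed.

Lemma next_edge N (E : graph_seq N) k p i l n : l != i -> E k l i -> p l = Some n ->
  exists m, tau_next E k p i = Some m /\ m <= n.+1.
Proof.
move=> hli hE hl.
case hfr: (fresher (p l) (p i)).
  have hin : l \in Fset E k p i by rewrite memF hli hE hfr.
  exact: next_min (erefl _) hin hl.
move: hfr; rewrite hl; case hpi: (p i) => [x|] //= /negbT; rewrite -leqNgt => hx.
have [m [hm hmx]] := next_self E k hpi; exists m; split => //; exact: leq_trans hmx _.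
Qed.

Lemma tau_src N (E : graph_seq N) j k : tau E j k j = Some 0.
Proof. by case: k => [|k] /=; rewrite eqxx. Qed.

Definition reachb N (E : graph_seq N) j s k i :=
  if tau E j k i is Some n then n + s <= k else false.

Definition R N (E : graph_seq N) j s k : {set 'I_N} := [set i | reachb E j s k i].

Lemma reach_le N (E : graph_seq N) j s k i : i \in R E j s k -> s <= k.
Proof. rewrite inE /reachb; case: (tau E j k i) => // n; lia. Qed.

Lemma R_src N (E : graph_seq N) j s k : s <= k -> j \in R E j s k.
Proof. by rewrite inE /reachb tau_src. Qed.

Lemma R_step N (E : graph_seq N) j s k : R E j s k \subset R E j s k.+1.
Proof.
apply/subsetP => i hi; have hs := reach_le hi.
case: (eqVneq i j) => [->|hij]; first by apply: R_src; lia.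
move: hi; rewrite !inE /reachb /= (negbTE hij).
case hn: (tau E j k i) => [n|] // hn2.
have [m [-> hm]] := next_self E k hn; lia.
Qed.

Lemma R_mono N (E : graph_seq N) j s k1 k2 : k1 <= k2 -> R E j s k1 \subset R E j s k2.
Proof.
move=> /subnK <-; elim: (k2 - k1) => [|d IH] //=.
apply: subset_trans IH _; rewrite addSn; exact: R_step.
Qed.

Lemma R_edge N (E : graph_seq N) j s k l i : l \in R E j s k -> E k l i -> l != i ->
  i \in R E j s k.+1.
Proof.
move=> hl hE hli; have hs := reach_le hl.
case: (eqVneq i j) => [->|hij]; first by apply: R_src; lia.
move: hl; rewrite !inE /reachb /= (negbTE hij).
case hn: (tau E j k l) => [n|] // hn2.
have [m [-> hm]] := next_edge hli hE hn; lia.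
Qed.

Lemma path_cross N (r : rel 'I_N) (A : {set 'I_N}) u p :
  path r u p -> u \in A -> last u p \notin A ->
  exists x y, [/\ r x y, x \in A & y \notin A].
Proof.
elim: p u => [|a p IH] u /=; first by move=> _ ->.
move=> /andP [hua hp] hu hl.
case ha: (a \in A); first exact: IH hp ha hl.
by exists u, a; rewrite ha.
Qed.

Lemma growth N (E : graph_seq N) (t : nat -> nat) j s q
  (htinc : forall q, t q < t q.+1)
  (hC3 : forall q, strongly_connected (union_rel E (t q) (t q.+1).-1)) :
  s <= t q ->
  R E j s (t q.+1) = setT \/ #|R E j s (t q)|.+1 <= #|R E j s (t q.+1)|.
Proof.
move=> hs.
have hsub := R_mono E j s (ltnW (htinc q)).
case: (eqVneq (R E j s (t q)) setT) => [hT|hnT].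
  left; apply/eqP; rewrite eqEsubset subsetT /=; by rewrite -hT.
right.
have [v hv] : exists v, v \notin R E j s (t q).
  case: (pickP (fun v => v \notin R E j s (t q))) => [v hv|H]; first by exists v.
  exfalso; move/eqP: hnT; apply; apply/eqP; rewrite eqEsubset subsetT /=; apply/subsetP => x _; by move: (H x) => /= /negbFE.
have hj := R_src E j hs.
have /connectP [p hp hlast] := hC3 q j v.
have hl : last j p \notin R E j s (t q) by rewrite -hlast.
have [x [y [hxy hx hy]]] := path_cross hp hj hl.
move: hxy; rewrite /union_rel => /hasP [tt htt hE].
move: htt; rewrite mem_index_iota => /andP [h1 h2].
have htq := htinc q.
have hx' : x \in R E j s tt by apply: (subsetP (R_mono E j s h1)).
have hxy : x != y by apply/eqP => hxy; move: hx; rewrite hxy (negbTE hy).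
have hy' := R_edge hx' hE hxy.
have hy'' : y \in R E j s (t q.+1) by apply: (subsetP (R_mono E j s _)) hy'; lia.
have := cardsU1 y (R E j s (t q)); rewrite hy add1n => <-.
apply: subset_leq_card; apply/subsetP => z; rewrite in_setU1 => /orP [/eqP ->//|hz].
exact: (subsetP hsub).
Qed.

Lemma t_mono (t : nat -> nat) (htinc : forall q, t q < t q.+1) a b : a <= b -> t a <= t b.
Proof.
move=> /subnK <-; elim: (b - a) => [|d IH] //=; rewrite addSn.
exact: leq_trans IH (ltnW (htinc _)).
Qed.

Lemma full N (E : graph_seq N) (t : nat -> nat) j p
  (htinc : forall q, t q < t q.+1)
  (hC3 : forall q, strongly_connected (union_rel E (t q) (t q.+1).-1)) :
  forall n, R E j (t p) (t (p + n)) = setT \/ n.+1 <= #|R E j (t p) (t (p + n))|.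
Proof.
elim => [|n IH].
  right; rewrite addn0 card_gt0; apply/set0Pn; exists j; exact: R_src.
have hs : t p <= t (p + n) by apply: t_mono => //; lia.
rewrite addnS.
have [hT|hg] := @growth N E t j (t p) (p + n) htinc hC3 hs; first by left.
case: IH => [hT|hc].
  left; apply/eqP; rewrite eqEsubset subsetT /= -hT; apply: R_mono; exact: ltnW.
by right; apply: leq_trans hg.
Qed.

Lemma t_diff (t : nat -> nat) (htinc : forall q, t q < t q.+1)
  (hC1 : forall q, t q.+1 - t q <= t q.+2 - t q.+1) p m :
  t (p + m) - t p <= m * (t (p + m).+1 - t (p + m)).
Proof.
have fmono : forall a b, a <= b -> t a.+1 - t a <= t b.+1 - t b.
  move=> a b /subnK <-; elim: (b - a) => [|d IH] //=; rewrite addSn.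
  exact: leq_trans IH (hC1 _).
elim: m => [|m IH]; first by rewrite addn0 subnn.
have h1 := fmono (p + m) (p + m.+1) ltac:(lia).
have h2 := htinc (p + m). have h3 := htinc (p + m.+1).
have h4 : t p <= t (p + m) by apply: t_mono => //; lia.
rewrite addnS in h1 h3 *.
have : m * (t (p + m).+1 - t (p + m)) <= m * (t (p + m).+2 - t (p + m).+1) by apply: leq_mul.
nia.
Qed.

Theorem mainTheorem7 (N : nat) (E : graph_seq N) (t : nat -> nat)
  (ht0 : t 0 = 0)
  (htinc : forall q, t q < t q.+1)
  (hC1 : forall q, t q.+1 - t q <= t q.+2 - t q.+1)
  (hC3 : forall q, strongly_connected (union_rel E (t q) (t q.+1).-1)) :
  forall (j i : 'I_N) (k q : nat),
    t (N - 1) <= k ->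
    t q <= k < t q.+1 ->
    exists n, tau E j k i = Some n /\ n <= 2 * (N - 1) * (t q.+1 - t q).
Proof.
move=> j i k q hN /andP [hq1 hq2].
case: (leqP N 1) => hN1.
  have hij : i = j by apply: ord_inj; move: (ltn_ord i) (ltn_ord j); lia.
  by exists 0; rewrite hij tau_src.
have hqN : N - 1 <= q.
  rewrite leqNgt; apply/negP => hlt.
  have := t_mono htinc hlt; lia.
set p := q - (N - 1).
have hpq : p + (N - 1) = q by rewrite /p subnK.
have hfull : R E j (t p) (t q) = setT.
  have := @full N E t j p htinc hC3 (N - 1); rewrite hpq; case => [//|hc].
  apply/eqP; rewrite eqEcard subsetT cardsT card_ord /=; apply: leq_trans _ hc; rewrite subn1 prednK //; exact: ltnW hN1.
have : i \in R E j (t p) k by apply: (subsetP (R_mono E j _ hq1)); rewrite hfull inE.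
rewrite inE /reachb; case: (tau E j k i) => [n|] // hn.
exists n; split => //.
have hd := t_diff htinc hC1 p (N - 1); rewrite hpq in hd.
have hpq' : t p <= t q by apply: t_mono => //; lia.
set f := t q.+1 - t q in hd *.
have : N * f <= 2 * (N - 1) * f by apply: leq_mul => //; lia.
nia.
Qed.
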